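(* Let $\Omega\subseteq\mathbb{F}$ be a P-closed set with finite P-basis $\mathcal{B}$ and $n=\mathrm{Rk}(\Omega)$, and let $\mathcal{C}\subseteq\mathbb{F}^\mathcal{B}$ be a left linear code of dimension $k\ge1$. Then $\mathrm{d}_\mathcal{B}(\mathcal{C})=n-k+1$ (i.e. $\mathcal{C}$ is maximum skew distance) if and only if $\pi_{\mathcal{B},\mathcal{A}}(\mathcal{C})\subseteq\mathbb{F}^\mathcal{A}$ is MDS (has minimum Hamming distance $n-k+1$) for every P-basis $\mathcal{A}$ of $\Omega$.
   Context: $\mathbb{F}$ is a division ring, $\sigma$ a ring endomorphism, $\delta$ a $\sigma$-derivation; $\mathbb{F}[x;\sigma,\delta]$ the skew polynomial ring ($xa=\sigma(a)x+\delta(a)$), evaluation $F(a)$ defined by $F-F(a)\in\mathbb{F}[x;\sigma,\delta](x-a)$. P-closure $\overline\Omega$ is the common zero set of all skew polynomials vanishing on $\Omega$; P-closed, P-independent (no element in the P-closure of the others), P-basis (P-independent subset whose P-closure is $\Omega$); $\mathrm{Rk}(\Omega)$ is the common size of P-bases. $E_\mathcal{B}$ (evaluation on $\mathcal{B}$) is a bijection from skew polynomials of degree $<n$ onto $\mathbb{F}^\mathcal{B}$. Skew weight $\mathrm{wt}_\mathcal{B}(E_\mathcal{B}(F))=n-\mathrm{Rk}(Z(F)\cap\Omega)$; $\mathrm{d}_\mathcal{B}(\mathcal{C})$ is the minimum of $\mathrm{wt}_\mathcal{B}(f-g)$ over distinct $f,g\in\mathcal{C}$. $\pi_{\mathcal{B},\mathcal{A}}(E_\mathcal{B}(F))=E_\mathcal{A}(F)$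 for $\deg F<n$. *)

(* Defs.v *)
(* Skew polynomials F[x; sigma, delta] over a division ring F
   are represented by their (left) coefficient sequences in {poly F};
   only the additive structure of {poly F} is used, the skew product is
   defined below as [skmul]. *)
From Stdlib Require Import ClassicalEpsilon.
From HB Require Import structures.
From mathcomp Require Import all_boot all_order all_algebra.

Unset Strict Implicit. Unset Printing Implicit Defensive.
Import GRing.Theory.
Local Open Scope ring_scope.

Section Skew.
Context {F : unitRingType}.
Variables (sigma delta : F -> F).

(* x * G, using x a = sigma(a) x + delta(a) *)
Definition xmul (G : {poly F}) : {poly F} :=
  'X * map_poly sigma G + map_poly delta G.

Definition skmul (P G : {poly F}) : {poly F} :=
  \sum_(i < size P) (P`_i)%:P * iter (nat_of_ord i) xmul G.

Definition skeval (P : {poly F}) (a : F) : F :=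
  epsilon (inhabits 0) (fun b => exists Q : {poly F}, P - b%:P = skmul Q ('X - a%:P)).

Definition Pclos (S : F -> Prop) (a : F) : Prop :=
  forall P : {poly F}, (forall b, S b -> skeval P b = 0) -> skeval P a = 0.

Definition Pclosed (S : F -> Prop) : Prop := forall a, Pclos S a -> S a.

Definition Pindep (B : seq F) : Prop :=
  forall i, (i < size B)%N ->
    ~ Pclos (fun a => exists j, [/\ (j < size B)%N, j != i & a = nth 0 B j]) (nth 0 B i).

Definition PBasis (S : F -> Prop) (B : seq F) : Prop :=
  [/\ forall b, b \in B -> S b, Pindep B & forall a, Pclos (fun b => b \in B) a <-> S a].

Definition Rk (S : F -> Prop) : nat :=
  epsilon (inhabits 0%N) (fun m => exists B, size B = m /\ PBasis S B).

Definition Evec (B : seq F) (P : {poly F}) : 'rV[F]_(size B) :=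
  \row_(i < size B) skeval P (nth 0 B i).

Definition polyOf (B : seq F) (c : 'rV[F]_(size B)) : {poly F} :=
  epsilon (inhabits 0) (fun P : {poly F} => (size P <= size B)%N /\ Evec B P = c).

Definition skew_wt (Om : F -> Prop) (B : seq F) (c : 'rV[F]_(size B)) : nat :=
  (Rk Om - Rk (fun a => Om a /\ skeval (polyOf B c) a = 0%R))%N.

Definition piBA (B A : seq F) (C : 'rV[F]_(size B) -> Prop) : 'rV[F]_(size A) -> Prop :=
  fun c' => exists c, C c /\ c' = Evec A (polyOf B c).

End Skew.

Definition ham_wt (F : unitRingType) (m : nat) (c : 'rV[F]_m) : nat :=
  #|[pred i : 'I_m | c 0 i != 0]|.

Definition min_dist_is (F : unitRingType) (m : nat) (wt : 'rV[F]_m -> nat)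
  (C : 'rV[F]_m -> Prop) (d : nat) : Prop :=
  (exists f g, [/\ C f, C g, f <> g & wt (f - g)%R = d]) /\
  (forall f g, C f -> C g -> f <> g -> (d <= wt (f - g)%R)%N).

Definition left_code_dim (F : unitRingType) (m : nat) (C : 'rV[F]_m -> Prop) (k : nat) : Prop :=
  exists v : 'I_k -> 'rV[F]_m,
    (forall a : 'I_k -> F, \sum_i a i *: v i = 0 -> forall i, a i = 0) /\
    (forall c, C c <-> exists a : 'I_k -> F, c = \sum_i a i *: v i).

Arguments ham_wt {F m} c.
Arguments min_dist_is {F m} wt C d.
Arguments left_code_dim {F m} C k.

(* Main.v *)
Require Import Defs.
From HB Require Import structures.
From mathcomp Require Import all_boot all_order all_algebra.
From Stdlib Require Import ClassicalEpsilon FunctionalExtensionality.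
From mathcomp Require Import zify.
Import GRing.Theory.
Import GRing.Theory.
Local Open Scope ring_scope.
Set Implicit Arguments. Unset Strict Implicit.

Section Skew.
Variable F : unitRingType.
Hypothesis hdiv : forall a : F, a != 0 -> a \is a GRing.unit.
Variable sigma : {rmorphism F -> F}.
Variable delta : F -> F.
Hypothesis hdadd : forall a b : F, delta (a + b) = delta a + delta b.
Hypothesis hdmul : forall a b : F, delta (a * b) = sigma a * delta b + delta a * b.

Lemma delta0 : delta 0 = 0.
Proof. have := hdadd 0 0; rewrite addr0 => h; apply/eqP; rewrite -(addrI (delta 0) (etrans (addr0 _) h)) //. Qed.
Lemma deltaN a : delta (- a) = - delta a.
Proof. apply/eqP; rewrite -subr_eq0 opprK -hdadd addNr delta0 //. Qed.
Lemma deltaB a b : delta (a - b) = delta a - delta b.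
Proof. by rewrite hdadd deltaN. Qed.
Lemma delta1 : delta 1 = 0.
Proof. have := hdmul 1 1; rewrite rmorph1 !mul1r mulr1 => h.
  by have := addrI (delta 1) (etrans (addr0 _) h). Qed.
Lemma delta_sum I (r : seq I) (P : pred I) (f : I -> F) :
  delta (\sum_(i <- r | P i) f i) = \sum_(i <- r | P i) delta (f i).
Proof. exact: (big_morph delta hdadd delta0). Qed.

Definition Ta (a g : F) := sigma g * a + delta g.
Definition N (a : F) (i : nat) := iter i (Ta a) 1.

Lemma Ta0 a : Ta a 0 = 0.
Proof. by rewrite /Ta rmorph0 mul0r delta0 addr0. Qed.
Lemma iterTa0 a i : iter i (Ta a) 0 = 0.
Proof. by elim: i => //= i ->; rewrite Ta0. Qed.

Definition ev (P : {poly F}) (a : F) := \sum_(i < size P) P`_i * N a i.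

Lemma sum_widen (f : nat -> F) n m :
  (n <= m)%N -> (forall i, (n <= i)%N -> f i = 0) ->
  \sum_(i < n) f i = \sum_(i < m) f i.
Proof.
move=> nm hf; rewrite (big_ord_widen _ _ nm) big_mkcond /=.
apply: eq_bigr => i _; case: ifP => // /negbT; rewrite -leqNgt => /hf -> //.
Qed.

Lemma evE m (P : {poly F}) a : (size P <= m)%N -> ev P a = \sum_(i < m) P`_i * N a i.
Proof.
move=> h; rewrite /ev; apply: (@sum_widen (fun i : nat => P`_i * N a i) _ _ h) => i hi.
by rewrite nth_default ?mul0r.
Qed.

Lemma evD (P Q : {poly F}) a : ev (P + Q) a = ev P a + ev Q a.
Proof.
set m := maxn (size P) (size Q).
rewrite (@evE m) ?(@evE m P) ?(@evE m Q) ?leq_maxl ?leq_maxr //; last first.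
  by rewrite (leq_trans (size_polyD _ _)).
by rewrite -big_split /=; apply: eq_bigr => i _; rewrite coefD mulrDl.
Qed.

Lemma evCM c (P : {poly F}) a : ev (c%:P * P) a = c * ev P a.
Proof.
rewrite (@evE (size P)); last first.
  rewrite (leq_trans (size_polyMleq _ _)) //; move: (size_polyC_leq1 c).
  by case: (size c%:P) => [|[|]] //= _; rewrite leq_pred.
by rewrite /ev mulr_sumr; apply: eq_bigr => i _; rewrite coefCM mulrA.
Qed.

Lemma ev0 a : ev 0 a = 0.
Proof. by rewrite /ev size_poly0 big_ord0. Qed.
Lemma evN (P : {poly F}) a : ev (- P) a = - ev P a.
Proof. by rewrite -mulN1r -polyCN evCM mulN1r. Qed.
Lemma evB (P Q : {poly F}) a : ev (P - Q) a = ev P a - ev Q a.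
Proof. by rewrite evD evN. Qed.
Lemma evC c a : ev c%:P a = c.
Proof. by rewrite (@evE 1) ?size_polyC_leq1 // big_ord1 coefC /= /N /= mulr1. Qed.
Lemma ev_sum I (r : seq I) (Pr : pred I) (f : I -> {poly F}) a :
  ev (\sum_(i <- r | Pr i) f i) a = \sum_(i <- r | Pr i) ev (f i) a.
Proof. exact: (big_morph (fun P => ev P a) (fun P Q => evD P Q a) (ev0 a)). Qed.

Lemma size_map_le (f : F -> F) (p : {poly F}) : (size (map_poly f p) <= size p)%N.
Proof. by rewrite map_polyE (leq_trans (size_Poly _)) // size_map. Qed.

Lemma ev_xmul (G : {poly F}) a : ev (xmul sigma delta G) a = Ta a (ev G a).
Proof.
set m := size G.
rewrite /xmul evD.
have h1 : (size ('X * map_poly sigma G)%R <= m.+1)%N.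
  rewrite (leq_trans (size_polyMleq _ _)) // size_polyX /=; exact: size_map_le.
rewrite (@evE _ _ a h1) (@evE m (map_poly delta G)) ?size_map_le //.
rewrite big_ord_recl coefXM eqxx mul0r add0r.
rewrite /Ta /ev -/m rmorph_sum /= mulr_suml delta_sum -!big_split /=.
apply: eq_bigr => i _; rewrite coefXM /= add0n coef_map_id0 ?rmorph0 //.
rewrite coef_map_id0 ?delta0 // /Ta hdmul rmorphM mulrDr !addrA !mulrA //.
Qed.

Notation xm := (xmul sigma delta).
Notation sk := (skmul sigma delta).

Lemma psum_widen (f : nat -> {poly F}) n m :
  (n <= m)%N -> (forall i, (n <= i)%N -> f i = 0) ->
  \sum_(i < n) f i = \sum_(i < m) f i.
Proof.
move=> nm hf; rewrite (big_ord_widen _ _ nm) big_mkcond /=.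
apply: eq_bigr => i _; case: ifP => // /negbT; rewrite -leqNgt => /hf -> //.
Qed.

Lemma skmulE m (Q G : {poly F}) : (size Q <= m)%N ->
  sk Q G = \sum_(i < m) (Q`_i)%:P * iter i xm G.
Proof.
move=> h; rewrite /skmul; apply: (@psum_widen (fun i : nat => (Q`_i)%:P * iter i xm G) _ _ h).
by move=> i hi; rewrite nth_default // mul0r.
Qed.

Lemma skmul0 G : sk 0 G = 0.
Proof. by rewrite /skmul size_poly0 big_ord0. Qed.

Lemma skmulD Q1 Q2 G : sk (Q1 + Q2) G = sk Q1 G + sk Q2 G.
Proof.
set m := maxn (size Q1) (size Q2).
rewrite (@skmulE m) ?(@skmulE m Q1) ?(@skmulE m Q2) ?leq_maxl ?leq_maxr //; last first.
  by rewrite (leq_trans (size_polyD _ _)).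
by rewrite -big_split /=; apply: eq_bigr => i _; rewrite coefD polyCD mulrDl.
Qed.

Lemma skmulCM c Q G : sk (c%:P * Q) G = c%:P * sk Q G.
Proof.
rewrite (@skmulE (size Q)); last first.
  rewrite (leq_trans (size_polyMleq _ _)) //; move: (size_polyC_leq1 c).
  by case: (size c%:P) => [|[|]] //= _; rewrite leq_pred.
by rewrite /skmul mulr_sumr; apply: eq_bigr => i _; rewrite coefCM polyCM mulrA.
Qed.

Lemma skmulN Q G : sk (- Q) G = - sk Q G.
Proof. by rewrite -mulN1r -polyCN skmulCM polyCN mulN1r. Qed.

Lemma skmulB Q1 Q2 G : sk (Q1 - Q2) G = sk Q1 G - sk Q2 G.
Proof. by rewrite skmulD skmulN. Qed.

Lemma skmulXn j G : sk 'X^j G = iter j xm G.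
Proof.
rewrite (@skmulE j.+1) ?size_polyXn // big_ord_recr /= coefXn eqxx mul1r big1 ?add0r //.
by move=> i _; rewrite coefXn eqn_leq (leqNgt j) ltn_ord andbF mul0r.
Qed.

Lemma ev_iter i G a : ev (iter i xm G) a = iter i (Ta a) (ev G a).
Proof. by elim: i => //= i IH; rewrite ev_xmul IH. Qed.

Lemma ev_skmul Q G a :
  ev (sk Q G) a = \sum_(i < size Q) Q`_i * iter i (Ta a) (ev G a).
Proof. by rewrite /skmul ev_sum; apply: eq_bigr => i _; rewrite evCM ev_iter. Qed.

Lemma ev_skmul0 Q G a : ev G a = 0 -> ev (sk Q G) a = 0.
Proof. by move=> h; rewrite ev_skmul h big1 // => i _; rewrite iterTa0 mulr0. Qed.

Lemma ev_skmulXsub b G a :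
  ev (sk ('X - b%:P) G) a = Ta a (ev G a) - b * ev G a.
Proof.
rewrite ev_skmul polyseqXsubC /= big_ord_recl big_ord1 /= mul1r mulNr addrC //.
Qed.

Lemma ev_Xsub a : ev ('X - a%:P) a = 0.
Proof.
rewrite (@evE 2) ?size_XsubC // big_ord_recl big_ord1 polyseqXsubC /= /N /= /Ta.
by rewrite mulr1 mul1r rmorph1 mul1r delta1 addr0 addNr.
Qed.

Lemma size_sum_le n (f : nat -> {poly F}) b :
  (forall i, (i < n)%N -> (size (f i) <= b)%N) -> (size (\sum_(i < n) f i)%R <= b)%N.
Proof.
elim: n => [|n IH] h; first by rewrite big_ord0 size_poly0.
rewrite big_ord_recr /= (leq_trans (size_polyD _ _)) // geq_max h // andbT.
by apply: IH => i hi; apply: h; rewrite ltnS ltnW.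
Qed.

Lemma xmul_monic (G : {poly F}) : G \is monic -> xm G \is monic /\ size (xm G) = (size G).+1.
Proof.
move=> hG; have hl : lead_coef G = 1 by apply/eqP; rewrite -monicE.
have s1 : size (map_poly sigma G) = size G.
  by rewrite size_map_poly_id0 // hl rmorph1 oner_neq0.
have l1 : lead_coef (map_poly sigma G) = 1.
  by rewrite lead_coef_map_id0 ?rmorph0 ?hl ?rmorph1 ?oner_neq0.
have nz : map_poly sigma G != 0 by rewrite -lead_coef_eq0 l1 oner_neq0.
have e : 'X * map_poly sigma G = map_poly sigma G * 'X by rewrite commr_polyX.
have s2 : size ('X * map_poly sigma G) = (size G).+1 by rewrite e size_mulX // s1.
have s3 : (size (map_poly delta G) < size ('X * map_poly sigma G)%R)%N.
  by rewrite s2 ltnS size_map_le.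
rewrite /xmul monicE lead_coefDl // size_polyDl // s2 e lead_coefMX l1; split => //.
Qed.

Lemma iter_monic i (G : {poly F}) : G \is monic -> iter i xm G \is monic /\ size (iter i xm G) = (size G + i)%N.
Proof.
move=> hG; elim: i => [|i [h1 h2]] /=; first by rewrite addn0.
by have [-> ->] := xmul_monic h1; rewrite h2 addnS.
Qed.

Lemma size_CM_monic (c : F) (M : {poly F}) : c != 0 -> M \is monic ->
  size (c%:P * M) = size M /\ lead_coef (c%:P * M) = c.
Proof.
move=> hc hM; rewrite size_Mmonic ?polyC_eq0 // size_polyC hc lead_coef_Mmonic //.
by rewrite lead_coefC.
Qed.

Lemma size_CM_le (c : F) (M : {poly F}) : (size (c%:P * M)%R <= size M)%N.
Proof.
rewrite (leq_trans (size_polyMleq _ _)) //; move: (size_polyC_leq1 c).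
by case: (size c%:P) => [|[|]] //= _; rewrite leq_pred.
Qed.

Lemma skmul_size (Q G : {poly F}) : G \is monic -> Q != 0 ->
  size (sk Q G) = (size Q + size G).-1 /\ lead_coef (sk Q G) = lead_coef Q.
Proof.
move=> hG hQ; have hs : (0 < size G)%N by rewrite size_poly_gt0 monic_neq0.
have hq0 : size Q != 0%N by rewrite size_poly_eq0.
have hlQ : lead_coef Q = Q`_(size Q).-1 by rewrite lead_coefE.
have hq1 : lead_coef Q != 0 by rewrite lead_coef_eq0.
rewrite /skmul hlQ; rewrite hlQ in hq1; case e: (size Q) hq0 hq1 => [|q] // _ /= hq.
rewrite big_ord_recr /=.
have [i1 i2] := iter_monic q hG.
have [c1 c2] := size_CM_monic hq i1.
have hlt : (size (\sum_(i < q) (Q`_i)%:P * iter i xm G)%R < size ((Q`_q)%:P * iter q xm G)%R)%N.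
  rewrite c1 i2; case: q {e hq i1 i2 c1 c2} => [|q]; first by rewrite big_ord0 size_poly0 addn0.
  rewrite addnS ltnS; apply: (@size_sum_le q.+1 (fun i => (Q`_i)%:P * iter i xm G)) => i hi.
  by rewrite (leq_trans (size_CM_le _ _)) // (iter_monic i hG).2 leq_add2l -ltnS.
rewrite addrC size_polyDl // lead_coefDl // c1 c2 i2; split => //.
by rewrite addnC.
Qed.

Lemma size_sub_lt (P M : {poly F}) : size P = size M -> lead_coef P = lead_coef M ->
  (0 < size P)%N -> (size (P - M)%R < size P)%N.
Proof.
move=> hs hl hp; case e: (size P) hp => [|p] // _.
apply/leq_sizeP => j hj; rewrite coefB; move: hj; rewrite leq_eqVlt => /orP [/eqP <-|hj].
  by move: hl; rewrite !lead_coefE -hs e /= => ->; rewrite subrr.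
by rewrite !nth_default ?subrr // -?hs e.
Qed.

Lemma skdiv G : G \is monic -> forall P, exists Q R, P = sk Q G + R /\ (size R < size G)%N.
Proof.
move=> hG P; have hs : (0 < size G)%N by rewrite size_poly_gt0 monic_neq0.
move: {2}(size P) (leqnn (size P)) => n; elim: n P => [|n IH] P hP.
  by exists 0, P; rewrite skmul0 add0r; move: hP; rewrite leqn0 => /eqP ->.
case: (ltnP (size P) (size G)) => hPG; first by exists 0, P; rewrite skmul0 add0r.
set c := lead_coef P; set j := (size P - size G)%N.
have hc : c != 0 by rewrite lead_coef_eq0 -size_poly_eq0 -lt0n (leq_trans hs).
set M := c%:P * iter j xm G.
have [m1 m2] := size_CM_monic hc (iter_monic j hG).1.
rewrite (iter_monic j hG).2 subnKC // in m1.
have hlt := size_sub_lt (esym m1) (esym m2) (leq_trans hs hPG).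
have [Q [R [e hR]]] := IH (P - M) (leq_trans hlt hP).
  exists (Q + c%:P * 'X^j), R; split => //.
  by rewrite skmulD skmulCM skmulXn -/M addrAC -e subrK.
Qed.

Lemma skeval_ev (P : {poly F}) a : skeval sigma delta P a = ev P a.
Proof.
rewrite /skeval; set Pr := fun b : F => _.
have ex : exists b, Pr b.
  have [Q [R [e hR]]] := skdiv (monicXsubC a) P.
  rewrite size_XsubC in hR; rewrite (size1_polyC hR) in e.
  by exists R`_0, Q; rewrite e addrK.
have [Q e] := epsilon_spec (inhabits 0) Pr ex.
have := congr1 (fun P => ev P a) e; rewrite /= ev_skmul0 ?ev_Xsub // evB evC.
by move/eqP; rewrite subr_eq0 => /eqP.
Qed.

Fixpoint Gp (S : seq F) : {poly F} :=
  match S with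
  | [::] => 1
  | s :: S' => let H := Gp S' in let g := ev H s in
     if g == 0 then H else sk ('X - (Ta s g * g^-1)%:P) H
  end.

Fixpoint fr (S : seq F) : Prop :=
  match S with
  | [::] => True
  | s :: S' => fr S' /\ ev (Gp S') s != 0
  end.

Lemma skmul1 G : sk 1 G = G.
Proof. by rewrite -(expr0 'X) skmulXn. Qed.

Lemma skXsub_monic b (H : {poly F}) : H \is monic ->
  sk ('X - b%:P) H \is monic /\ size (sk ('X - b%:P) H) = (size H).+1.
Proof.
move=> hH; have [h1 h2] := skmul_size hH (monic_neq0 (monicXsubC b)).
rewrite monicE h2 h1 size_XsubC lead_coefXsubC; split => //.
Qed.

Lemma Gp_monic S : Gp S \is monic /\ (size (Gp S) <= (size S).+1)%N.
Proof.
elim: S => [|s S [m1 m2]] /=; first by rewrite monic1 size_poly1.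
case: ifP => _; first by split => //; rewrite (leq_trans m2).
by have [-> ->] := skXsub_monic (Ta s (ev (Gp S) s) * (ev (Gp S) s)^-1) m1.
Qed.

Lemma Gp_size S : fr S -> size (Gp S) = (size S).+1.
Proof.
elim: S => [|s S IH] /=; first by rewrite size_poly1.
move=> [h1 h2]; rewrite (negbTE h2).
by rewrite (skXsub_monic _ (Gp_monic S).1).2 IH.
Qed.

Lemma Gp_van S s : s \in S -> ev (Gp S) s = 0.
Proof.
elim: S => [|t S IH] //=; rewrite in_cons => /orP hs.
case: ifP => [/eqP h0|hg].
  by case: hs => [/eqP ->|/IH].
case: hs => [/eqP ->|/IH h]; last by rewrite ev_skmul0.
rewrite ev_skmulXsub divrK ?subrr //; apply: hdiv; rewrite hg //.
Qed.

Lemma evC_mul c H a : ev (sk c%:P H) a = c * ev H a.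
Proof. by rewrite -[c%:P]mulr1 skmulCM skmul1 evCM. Qed.

Lemma G4 S (P : {poly F}) : fr S -> (size P <= size S)%N -> (forall s, s \in S -> ev P s = 0) -> P = 0.
Proof.
elim: S P => [|s S IH] P /=.
  by move=> _; rewrite leqn0 size_poly_eq0 => /eqP.
move=> [fS hg] hP hv.
have [m1 _] := Gp_monic S.
have [Q [R [e hR]]] := skdiv m1 P.
rewrite Gp_size // in hR.
have R0 : R = 0.
  apply: (IH R fS) => // t ht.
  have ht' : t \in s :: S by rewrite in_cons ht orbT.
  have := hv t ht'; rewrite e evD ev_skmul0 ?add0r //.
  exact: Gp_van.
rewrite R0 addr0 in e.
have [Qe|Q0] := eqVneq Q 0; first by rewrite e Qe skmul0.
have [s1 _] := skmul_size m1 Q0.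
have hQ : (size Q <= 1)%N.
  move: hP; rewrite e s1 Gp_size //=.
  by case: (size Q) => [|q] //; rewrite addSn /= => h; lia.
rewrite (size1_polyC hQ) in e.
have := hv s (mem_head _ _); rewrite e evC_mul => h.
have : Q`_0 = 0.
  by rewrite -(mulrK (hdiv hg) Q`_0) h mul0r.
by move=> h0; rewrite h0 skmul0.
Qed.

Lemma G3 S (P : {poly F}) : fr S -> (forall s, s \in S -> ev P s = 0) -> exists Q, P = sk Q (Gp S).
Proof.
move=> fS hv; have [m1 _] := Gp_monic S.
have [Q [R [e hR]]] := skdiv m1 P.
exists Q; suff R0 : R = 0 by rewrite e R0 addr0.
apply: (G4 fS); first by rewrite -ltnS -(Gp_size fS).
move=> t ht; have := hv t ht; rewrite e evD ev_skmul0 ?add0r //; exact: Gp_van.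
Qed.

Definition PC (S : F -> Prop) a :=
  forall P, (forall b, S b -> ev P b = 0) -> ev P a = 0.

Lemma PC_mono (S1 S2 : F -> Prop) a : (forall b, S1 b -> S2 b) -> PC S1 a -> PC S2 a.
Proof. by move=> h h1 P hP; apply: h1 => b /h /hP. Qed.

Lemma PC_self (S : F -> Prop) a : S a -> PC S a.
Proof. by move=> h P; apply. Qed.

Lemma clos S a : fr S -> (PC (fun b => b \in S) a <-> ev (Gp S) a = 0).
Proof.
move=> fS; split.
  by move=> h; apply: h => b; apply: Gp_van.
move=> h P hP; have [Q ->] := G3 fS hP; exact: ev_skmul0.
Qed.

Lemma sizele T (H : {poly F}) : fr T -> H != 0 -> (forall t, t \in T -> ev H t = 0) ->
  (size T < size H)%N.
Proof.
move=> fT hH hv; have [Q e] := G3 fT hv.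
have [m1 _] := Gp_monic T.
have Q0 : Q != 0 by apply: contraNneq hH => Q0; rewrite e Q0 skmul0.
have [s1 _] := skmul_size m1 Q0.
rewrite e s1 Gp_size //; move: Q0; rewrite -size_poly_eq0.
by case: (size Q) => [|q] // _; rewrite addSn /=; lia.
Qed.

Lemma skevalE : skeval sigma delta = ev.
Proof. by do 2 (apply: functional_extensionality => ?); apply: skeval_ev. Qed.

Lemma PclosE : Pclos sigma delta = PC.
Proof. by rewrite /Pclos skevalE. Qed.

Definition indep S := uniq S /\ forall x, x \in S -> ~ PC (fun b => b \in rem x S) x.

Lemma fr_uniq S : fr S -> uniq S.
Proof.
elim: S => [|s S IH] //= [fS hg]; rewrite IH // andbT.
by apply: contra hg => /Gp_van ->.
Qed.

Lemma fr_indep S : fr S -> indep S.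
Proof.
move=> fS; have uS := fr_uniq fS; split => // x hx hPC.
have [m1 m2] := Gp_monic (rem x S).
have : Gp (rem x S) = 0.
  have hs0 : (0 < size S)%N by case: (S) hx.
  apply: (G4 fS); first by rewrite (leq_trans m2) // size_rem // prednK.
  move=> y hy; case: (eqVneq y x) => [->|hyx].
    by apply: hPC => b hb; apply: Gp_van.
  by apply: Gp_van; rewrite mem_rem_uniq // inE hyx.
by apply/eqP; apply: monic_neq0.
Qed.

Lemma indep_fr S : indep S -> fr S.
Proof.
elim: S => [|s S IH] //= [uS hS]; move: uS => /= /andP [sS uS].
have iS : indep S.
  split => // x hx hPC; apply: (hS x); first by rewrite in_cons hx orbT.
  have xs : (s == x) = false by apply/negbTE; apply: contraNneq sS => ->.
  rewrite /= xs; apply: (PC_mono _ hPC) => b hb; rewrite in_cons hb orbT //.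
have fS := IH iS; split => //; apply/negP => /eqP h0.
apply: (hS s (mem_head _ _)); rewrite /= eqxx.
by apply/(clos _ fS).
Qed.

Lemma indep_filter (p : pred F) S : indep S -> indep (filter p S).
Proof.
move=> [uS hS]; have uf := filter_uniq p uS; split => // x.
rewrite mem_filter => /andP [px hx] hPC; apply: (hS x hx).
apply: (PC_mono _ hPC) => b; rewrite !mem_rem_uniq // !inE mem_filter.
by case/andP => -> /andP [_ ->].
Qed.

Definition others (S : seq F) i := fun a => exists j, [/\ (j < size S)%N, j != i & a = nth 0 S j].

Lemma Pindep_indep S :
  (forall i, (i < size S)%N -> ~ PC (others S i) (nth 0 S i)) <-> indep S.
Proof.
split.
  move=> h; have uS : uniq S.
    case uS: (uniq S); first by []. have := elimT (uniqPn 0) (negbT uS). case=> i [j [ij js e]]; exfalso.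
    have is_ : (i < size S)%N by apply: ltn_trans js.
    apply: (h i is_); apply: PC_self; exists j; split => //.
    by rewrite eq_sym neq_ltn ij.
  split => // x hx hPC; have is_ : (index x S < size S)%N by rewrite index_mem.
  apply: (h _ is_); rewrite nth_index //; apply: (PC_mono _ hPC) => b.
  rewrite mem_rem_uniq // inE => /andP [bx bS].
  exists (index b S); rewrite index_mem nth_index //; split => //.
  by apply: contra bx => /eqP e; rewrite -(nth_index 0 bS) e nth_index.
move=> [uS hS] i is_ hPC; apply: (hS _ (mem_nth 0 is_)).
apply: (PC_mono _ hPC) => b [j [js ji ->]].
by rewrite mem_rem_uniq // inE mem_nth // andbT nth_uniq.
Qed.

Lemma PBasisP (Om : F -> Prop) A : PBasis sigma delta Om A <->
  [/\ forall b, b \in A -> Om b, fr A & forall a, ev (Gp A) a = 0 <-> Om a].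
Proof.
rewrite /PBasis /Pindep PclosE; split.
  move=> [h1 h2 h3]; have fA : fr A by apply: indep_fr; apply/Pindep_indep.
  split => // a; rewrite -(clos _ fA); exact: h3.
move=> [h1 fA h3]; split => //.
  by apply/Pindep_indep; apply: fr_indep.
by move=> a; rewrite (clos _ fA).
Qed.

Lemma same_size A A' : fr A -> fr A' ->
  (forall a, ev (Gp A) a = 0 <-> ev (Gp A') a = 0) -> size A = size A'.
Proof.
move=> fA fA' h; apply/eqP; rewrite eqn_leq.
have l1 := sizele fA' (monic_neq0 (Gp_monic A).1) (fun t ht => proj2 (h t) (Gp_van ht)).
have l2 := sizele fA (monic_neq0 (Gp_monic A').1) (fun t ht => proj1 (h t) (Gp_van ht)).
by rewrite Gp_size // ltnS in l1; rewrite Gp_size // ltnS in l2; rewrite l1 l2.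
Qed.

Lemma RkE (Om : F -> Prop) A : PBasis sigma delta Om A -> Rk sigma delta Om = size A.
Proof.
move=> hA; rewrite /Rk; set Pr := fun m => _.
have [B' [<- hB']] := epsilon_spec (inhabits 0%N) Pr (ex_intro _ (size A) (ex_intro _ A (conj erefl hA))).
move/PBasisP: hA => [_ fA hA]; move/PBasisP: hB' => [_ fB hB].
apply: same_size => // a; rewrite hA hB //.
Qed.

Lemma cardnth (T : Type) (x0 : T) (s : seq T) (p : pred T) :
  #|[pred i : 'I_(size s) | p (nth x0 s i)]| = count p s.
Proof.
rewrite -sum1_card -(big_mkord (fun i => p (nth x0 s i)) (fun _ => 1%N)).
rewrite /index_iota subn0 sum1_count -count_map.
by rewrite -/(mkseq _ _) mkseq_nth.
Qed.

Lemma interp S (f : nat -> F) : fr S -> exists P : {poly F},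
  (size P <= size S)%N /\ forall i, (i < size S)%N -> ev P (nth 0 S i) = f i.
Proof.
elim: S f => [|s S IH] f /=.
  by move=> _; exists 0; rewrite size_poly0.
move=> [fS hg]; have [P' [hs hv]] := IH (fun i => f i.+1) fS.
set g := ev (Gp S) s; set c := (f 0%N - ev P' s) * g^-1.
exists (P' + c%:P * Gp S); split.
  rewrite (leq_trans (size_polyD _ _)) // geq_max (leq_trans hs) //=.
  by rewrite (leq_trans (size_CM_le _ _)) // Gp_size.
case=> [|i] hi; rewrite evD evCM.
  change (nth 0 (s :: S) 0) with s; rewrite -/g /c divrK; last exact: hdiv.
  by rewrite addrC subrK.
change (nth 0 (s :: S) i.+1) with (nth 0 S i).
by rewrite hv // Gp_van ?mulr0 ?addr0 // mem_nth.
Qed.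

Lemma EvecE B (P : {poly F}) : Evec sigma delta B P = \row_i ev P (nth 0 B i).
Proof. by rewrite /Evec skevalE. Qed.

Lemma Evec_van B (P Q : {poly F}) : Evec sigma delta B P = Evec sigma delta B Q ->
  forall s, s \in B -> ev (P - Q) s = 0.
Proof.
rewrite !EvecE => e s hs; have hi : (index s B < size B)%N by rewrite index_mem.
have := congr1 (fun M : 'rV_(size B) => M 0 (Ordinal hi)) e; rewrite /= !mxE nth_index //.
by rewrite evB => ->; rewrite subrr.
Qed.

Lemma polyOf_spec B c : fr B ->
  (size (polyOf sigma delta B c) <= size B)%N /\ Evec sigma delta B (polyOf sigma delta B c) = c.
Proof.
move=> fB; rewrite /polyOf.
apply: (@epsilon_spec _ (inhabits 0) (fun P : {poly F} => (size P <= size B)%N /\ Evec sigma delta B P = c)).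
have [P [hs hv]] := interp (fun i => if insub i is Some j then c 0 j else 0) fB.
exists P; split => //; rewrite EvecE; apply/rowP => j; rewrite !mxE hv //.
by rewrite valK.
Qed.

Lemma polyOf_uniq B (P : {poly F}) : fr B -> (size P <= size B)%N ->
  polyOf sigma delta B (Evec sigma delta B P) = P.
Proof.
move=> fB hP; have [h1 h2] := polyOf_spec (Evec sigma delta B P) fB.
apply/eqP; rewrite -subr_eq0; apply/eqP; apply: (G4 fB).
  by rewrite (leq_trans (size_polyD _ _)) // size_polyN geq_max h1.
exact: Evec_van.
Qed.

Lemma EvecD B (P Q : {poly F}) : Evec sigma delta B (P + Q) = Evec sigma delta B P + Evec sigma delta B Q.
Proof. by rewrite !EvecE; apply/rowP => j; rewrite !mxE evD. Qed.
Lemma EvecCM B a (P : {poly F}) : Evec sigma delta B (a%:P * P) = a *: Evec sigma delta B P.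
Proof. by rewrite !EvecE; apply/rowP => j; rewrite !mxE evCM. Qed.

Lemma polyOf_lin B a c d : fr B ->
  polyOf sigma delta B (a *: c + d) = a%:P * polyOf sigma delta B c + polyOf sigma delta B d.
Proof.
move=> fB; have [h1 h2] := polyOf_spec c fB; have [h3 h4] := polyOf_spec d fB.
rewrite -{1}h2 -{1}h4 -EvecCM -EvecD polyOf_uniq //.
rewrite (leq_trans (size_polyD _ _)) // geq_max h3 andbT (leq_trans (size_CM_le _ _)) //.
Qed.

Lemma EXT (Y : F -> Prop) N :
  (forall T, fr T -> (forall t, t \in T -> Y t) -> (size T <= N)%N) ->
  forall T0, fr T0 -> (forall t, t \in T0 -> Y t) ->
  exists U, [/\ fr (U ++ T0), (forall t, t \in U ++ T0 -> Y t) &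
            forall a, Y a -> ev (Gp (U ++ T0)) a = 0].
Proof.
move=> hN T0; move: {2}(N - size T0)%N (leqnn (N - size T0)%N) => k.
elim: k T0 => [|k IH] T0 hk fT0 hT0.
  case: (classic (exists a, Y a /\ ev (Gp T0) a != 0)) => [[a [ya ha]]|hn].
    have := hN (a :: T0) (conj fT0 ha).
    have : forall t, t \in a :: T0 -> Y t by move=> t; rewrite in_cons => /orP [/eqP ->|/hT0].
    move=> h /(_ h) /= hs; move: hk; rewrite leqn0 subn_eq0 => hk.
    by have := leq_trans hs hk; rewrite ltnn.
  exists [::]; split => // a ya; apply/eqP; apply/negPn/negP => h; apply: hn.
  by exists a.
case: (classic (exists a, Y a /\ ev (Gp T0) a != 0)) => [[a [ya ha]]|hn].
  have hY : forall t, t \in a :: T0 -> Y t by move=> t; rewrite in_cons => /orP [/eqP ->|/hT0].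
  have hs := hN (a :: T0) (conj fT0 ha) hY.
  have hk' : (N - size (a :: T0) <= k)%N.
    by rewrite /= subnS; case: (N - size T0)%N hk => [|m] //=.
  have [U [h1 h2 h3]] := IH (a :: T0) hk' (conj fT0 ha) hY.
  by exists (rcons U a); rewrite cat_rcons.
exists [::]; split => // a ya; apply/eqP; apply/negPn/negP => h; apply: hn.
by exists a.
Qed.

Section OmSec.
Variable Om : F -> Prop.
Hypothesis hOmc : forall a, PC Om a -> Om a.
Variable B : seq F.
Hypothesis fB : fr B.
Hypothesis hBz : forall a, ev (Gp B) a = 0 <-> Om a.

Lemma free_bound T : fr T -> (forall t, t \in T -> Om t) -> (size T <= size B)%N.
Proof.
move=> fT hT; have := sizele fT (monic_neq0 (Gp_monic B).1) (fun t ht => proj2 (hBz t) (hT t ht)).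
by rewrite Gp_size.
Qed.

Definition Zs (P : {poly F}) := fun a => Om a /\ ev P a = 0.

Lemma Zbasis P : exists T, [/\ fr T, (forall t, t \in T -> Zs P t) &
  forall a, ev (Gp T) a = 0 <-> Zs P a].
Proof.
have hN : forall T, fr T -> (forall t, t \in T -> Zs P t) -> (size T <= size B)%N.
  by move=> T fT hT; apply: free_bound => // t /hT [].
have [U [h1 h2 h3]] := EXT hN (T0 := [::]) I (fun t (ht : t \in [::]) => False_ind _ (notF ht)).
rewrite cats0 in h1 h2 h3; exists U; split => // a; split => [h|]; last exact: h3.
have hPC : PC (fun b => b \in U) a by apply/(clos _ h1).
split.
  by apply: hOmc; apply: (PC_mono _ hPC) => b /h2 [].
by apply: hPC => b /h2 [].
Qed.

Lemma wt_lb P T A : fr T -> (forall a, ev (Gp T) a = 0 <-> Zs P a) ->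
  fr A -> (forall a, a \in A -> Om a) ->
  (size A - size T <= count (fun a => ev P a != 0%R) A)%N.
Proof.
move=> fT hT fA hA.
set A' := filter (fun a => ev P a == 0) A.
have fA' : fr A' by apply: indep_fr; apply: indep_filter; apply: fr_indep.
have hv : forall t, t \in A' -> ev (Gp T) t = 0.
  by move=> t; rewrite mem_filter => /andP [/eqP h ht]; apply/hT; split => //; apply: hA.
have := sizele fA' (monic_neq0 (Gp_monic T).1) hv; rewrite Gp_size // ltnS size_filter.
have := count_predC (fun a => ev P a == 0) A.
have -> : count (predC (fun a => ev P a == 0)) A = count (fun a => ev P a != 0) A by [].
lia.
Qed.

Lemma wt_ach P T : fr T -> (forall t, t \in T -> Zs P t) ->
  (forall a, ev (Gp T) a = 0 <-> Zs P a) ->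
  exists A, [/\ fr A, (forall t, t \in A -> Om t), (forall a, ev (Gp A) a = 0 <-> Om a) &
    count (fun a => ev P a != 0) A = (size A - size T)%N].
Proof.
move=> fT hT hTz.
have hN : forall T, fr T -> (forall t, t \in T -> Om t) -> (size T <= size B)%N by apply: free_bound.
have [U [h1 h2 h3]] := EXT hN fT (fun t ht => (hT t ht).1).
exists (U ++ T); split => //.
  move=> a; split => [h|]; last exact: h3.
  have hPC : PC (fun b => b \in U ++ T) a by apply/(clos _ h1).
  by apply: hOmc; apply: (PC_mono _ hPC) => b /h2.
have uA := fr_uniq h1; have [_ iA] := fr_indep h1.
rewrite count_cat size_cat addnK.
have -> : count (fun a => ev P a != 0) T = 0%N.
  apply/eqP; rewrite -leqn0 leqNgt -has_count; apply/hasPn => t ht /=.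
  by rewrite (hT t ht).2 eqxx.
rewrite addn0 -[RHS]count_predT; apply: eq_in_count => u hu /=.
apply/negP => /eqP hz; apply: (iA u); first by rewrite mem_cat hu.
have hZ : Zs P u by split => //; apply: h2; rewrite mem_cat hu.
have : PC (fun b => b \in T) u by apply/(clos _ fT); apply/hTz.
apply: PC_mono => b hb; rewrite mem_rem_uniq // inE mem_cat hb orbT andbT.
move: uA; rewrite cat_uniq => /and3P [_ hn _].
by apply: contraNneq hn => e; apply/hasP; exists b => //; rewrite e.
Qed.
End OmSec.

Lemma LA m : forall k (M : 'I_k -> nat -> F), (m < k)%N ->
  exists a : 'I_k -> F, (exists i, a i != 0) /\
    forall j, (j < m)%N -> \sum_i a i * M i j = 0.
Proof.
elim: m => [|m IH] k M hk.
  by exists (fun _ => 1); split => //; exists (Ordinal hk); rewrite oner_neq0.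
case: (classic (exists i0, M i0 m != 0)) => [[i0 hp]|hn]; last first.
  have [a [ha hs]] := IH k M (ltnW hk); exists a; split => // j; rewrite ltnS leq_eqVlt.
  case/orP => [/eqP ->|/hs //]; apply: big1 => i _.
  have -> : M i m = 0 by apply/eqP; apply/negPn/negP => h; apply: hn; exists i.
  by rewrite mulr0.
move: hp; move: i0; move: hk; move: M; case: k => [|k] M hk i0 hp; first by have := ltn_ord i0.
set p := M i0 m.
set M' := fun (i : 'I_k) j => M (lift i0 i) j - M (lift i0 i) m * p^-1 * M i0 j.
have [b [[i1 hb] hs]] := IH k M' hk.
set c := - \sum_i b i * M (lift i0 i) m * p^-1.
exists (fun i => if unlift i0 i is Some i' then b i' else c); split.
  by exists (lift i0 i1); rewrite liftK.
move=> j hj; rewrite (bigD1_ord i0) //= unlift_none.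
under eq_bigr => i _ do rewrite liftK.
rewrite ltnS leq_eqVlt in hj; case/orP: hj => [/eqP ->|hj].
  rewrite /c mulNr mulr_suml.
  rewrite (eq_bigr (fun i => b i * M (lift i0 i) m)) ?addNr // => i _.
  by rewrite divrK //; apply: hdiv.
have := hs j hj; rewrite /M' /=.
under eq_bigr => i _ do rewrite mulrBr.
rewrite sumrB => /eqP; rewrite subr_eq0 => /eqP ->.
rewrite /c mulNr mulr_suml addrC -sumrB big1 // => i _.
by rewrite !mulrA subrr.
Qed.

Lemma countle (s : seq F) (p : pred F) m :
  (forall j, (j < m)%N -> ~~ p (nth 0 s j)) -> (m <= size s)%N ->
  (count p s <= size s - m)%N.
Proof.
move=> hj hm; rewrite -(cat_take_drop m s) count_cat.
have -> : count p (take m s) = 0%N.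
  apply/eqP; rewrite -leqn0 leqNgt -has_count; apply/hasPn => x hx.
  have hi : (index x (take m s) < size (take m s))%N by rewrite index_mem.
  rewrite -(nth_index 0 hx) nth_take; last by rewrite size_take_min in hi; move: hi; rewrite ltn_min => /andP [].
  by apply: hj; rewrite size_take_min ltn_min in hi; case/andP: hi.
by rewrite add0n cat_take_drop (leq_trans (count_size _ _)) // size_drop.
Qed.

Section Main.
Variable Om : F -> Prop.
Hypothesis hOm : Pclosed sigma delta Om.
Variable B : seq F.
Hypothesis hB : PBasis sigma delta Om B.
Variable C : 'rV[F]_(size B) -> Prop.
Variable k : nat.
Hypothesis hC : left_code_dim C k.
Hypothesis hk : (1 <= k)%N.

Let hOmc : forall a, PC Om a -> Om a.
Proof. by move: hOm; rewrite /Pclosed PclosE. Qed.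
Let hB3 := proj1 (PBasisP Om B) hB.
Let fB : fr B. Proof. by case: hB3. Qed.
Let hBz : forall a, ev (Gp B) a = 0 <-> Om a. Proof. by case: hB3. Qed.
Let hRk : Rk sigma delta Om = size B. Proof. exact: RkE hB. Qed.

Definition phi A c := Evec sigma delta A (polyOf sigma delta B c).
Notation P_ c := (polyOf sigma delta B c).
Notation wt := (skew_wt sigma delta Om B).

Lemma polyOf0 : P_ 0 = 0.
Proof.
have -> : (0 : 'rV_(size B)) = Evec sigma delta B 0.
  by rewrite EvecE; apply/rowP => j; rewrite !mxE ev0.
by rewrite polyOf_uniq // size_poly0.
Qed.
Lemma polyOfD c d : P_ (c + d) = P_ c + P_ d.
Proof. by rewrite -{1}(scale1r c) polyOf_lin // mul1r. Qed.
Lemma polyOfZ a c : P_ (a *: c) = a%:P * P_ c.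
Proof. by rewrite -(addr0 (a *: c)) polyOf_lin // polyOf0 addr0. Qed.
Lemma polyOfB c d : P_ (c - d) = P_ c - P_ d.
Proof. by rewrite polyOfD -scaleN1r polyOfZ polyCN mulN1r. Qed.

Lemma phiB A c d : phi A (c - d) = phi A c - phi A d.
Proof. by rewrite /phi polyOfB EvecD -mulN1r -polyCN EvecCM scaleN1r. Qed.
Lemma phi0 A : phi A 0 = 0.
Proof. by rewrite /phi polyOf0 EvecE; apply/rowP => j; rewrite !mxE ev0. Qed.
Lemma phiBB c : phi B c = c.
Proof. by rewrite /phi (polyOf_spec c fB).2. Qed.

Lemma hamE A (P : {poly F}) :
  ham_wt (Evec sigma delta A P) = count (fun a => ev P a != 0) A.
Proof.
rewrite /ham_wt EvecE -(cardnth 0 A (fun a => ev P a != 0)).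
by apply: eq_card => i; rewrite !inE mxE.
Qed.

Lemma basis_size A : PBasis sigma delta Om A -> size A = size B.
Proof. by move=> hA; rewrite -(RkE hA) hRk. Qed.

Lemma wtE c : exists T, [/\ fr T, (forall t, t \in T -> Zs Om (P_ c) t),
  (forall a, ev (Gp T) a = 0 <-> Zs Om (P_ c) a) & wt c = (size B - size T)%N].
Proof.
have [T [h1 h2 h3]] := Zbasis hOmc fB hBz (P_ c).
exists T; split => //.
rewrite /skew_wt hRk skevalE; congr (_ - _)%N.
apply: RkE; apply/PBasisP; split => //.
Qed.

Lemma phi_inj A c : PBasis sigma delta Om A -> phi A c = 0 -> c = 0.
Proof.
move=> hA h; have [_ fA _] := proj1 (PBasisP Om A) hA.
have e : Evec sigma delta A (P_ c) = Evec sigma delta A 0.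
  by rewrite -/(phi A c) h EvecE; apply/rowP => j; rewrite !mxE ev0.
have P0 : P_ c = 0.
  apply: (G4 fA); first by rewrite (basis_size hA) (polyOf_spec c fB).1.
  by move=> s hs; have := Evec_van e hs; rewrite subr0.
by rewrite -(polyOf_spec c fB).2 P0 -polyOf0 (polyOf_spec 0 fB).2.
Qed.

Lemma Klb A c : PBasis sigma delta Om A -> (wt c <= ham_wt (phi A c))%N.
Proof.
move=> hA; have [hA1 fA hAz] := proj1 (PBasisP Om A) hA.
have [T [h1 h2 h3 ->]] := wtE c.
rewrite /phi hamE -(basis_size hA); exact: wt_lb.
Qed.

Lemma Kach c : exists A, PBasis sigma delta Om A /\ ham_wt (phi A c) = wt c.
Proof.
have [T [h1 h2 h3 ->]] := wtE c.
have [A [a1 a2 a3 a4]] := wt_ach hOmc fB hBz h1 h2 h3.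
have hA : PBasis sigma delta Om A by apply/PBasisP.
by exists A; split => //; rewrite /phi hamE a4 (basis_size hA).
Qed.

Lemma C0 : C 0.
Proof.
case: hC => v [_ hv]; apply/hv; exists (fun _ => 0).
by rewrite big1 // => i _; rewrite scale0r.
Qed.

Lemma k_le_n : (k <= size B)%N.
Proof.
case: hC => v [hind hv]; rewrite leqNgt; apply/negP => hlt.
have [a [[i1 hi1] hs]] := LA (fun i j => if insub j is Some j' then v i 0 j' else 0) hlt.
suff : a i1 = 0 by move/eqP; rewrite (negbTE hi1).
apply: hind; apply/rowP => j; rewrite summxE [RHS]mxE.
have := hs j (ltn_ord j); rewrite valK => h; rewrite -[RHS]h.
by apply: eq_bigr => i _; rewrite !mxE.
Qed.

Lemma singleton A : PBasis sigma delta Om A ->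
  exists c, [/\ C c, c != 0 & (ham_wt (phi A c) <= size B - k + 1)%N].
Proof.
move=> hA; case: hC => v [hind hv].
have hk1 : (k.-1 < k)%N by rewrite prednK.
have [a [[i1 hi1] hs]] := LA (fun i j => ev (P_ (v i)) (nth 0 A j)) hk1.
set c := \sum_i a i *: v i.
have Cc : C c by apply/hv; exists a.
have hP : P_ c = \sum_i (a i)%:P * P_ (v i).
  rewrite /c (big_morph (fun c => P_ c) polyOfD polyOf0).
  by apply: eq_bigr => i _; rewrite polyOfZ.
exists c; split => //.
  apply/eqP => c0; move/eqP: hi1; apply; exact: hind c0 i1.
rewrite /phi hamE.
have -> : (size B - k + 1 = size A - k.-1)%N.
  by rewrite (basis_size hA); have := k_le_n; move: hk; case: (k) => // k' _ h /=; lia.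
apply: countle.
  move=> j hj; rewrite negbK hP ev_sum; apply/eqP; rewrite -[RHS](hs j hj).
  by apply: eq_bigr => i _; rewrite evCM.
by rewrite (basis_size hA) (leq_trans (leq_pred _)) // k_le_n.
Qed.

Lemma main :
  min_dist_is wt C (Rk sigma delta Om - k + 1)%N <->
  (forall A : seq F, PBasis sigma delta Om A ->
     min_dist_is (@ham_wt F (size A)) (piBA sigma delta B A C) (Rk sigma delta Om - k + 1)%N).
Proof.
rewrite hRk; split.
  move=> [_ lb] A hA; split.
    have [c [Cc c0 hc]] := singleton hA.
    exists (phi A c), (phi A 0); split.
    - by exists c.
    - by exists 0; split => //; exact: C0.
    - by rewrite phi0 => /(phi_inj hA) /eqP; rewrite (negbTE c0).
    apply/eqP; rewrite eqn_leq; rewrite phi0 subr0 hc /=.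
    have := lb c 0 Cc C0 (fun e => (negP c0) (introT eqP e)).
    by rewrite subr0 => h; rewrite (leq_trans h) // Klb.
  move=> f' g' [f [Cf ->]] [g [Cg ->]] ne.
  have fg : f <> g by move=> e; apply: ne; rewrite e.
  rewrite -[_ - _]/(phi A f - phi A g) -phiB.
  by rewrite (leq_trans (lb f g Cf Cg fg)) // Klb.
move=> H.
have lb : forall f g, C f -> C g -> f <> g -> (size B - k + 1 <= wt (f - g))%N.
  move=> f g Cf Cg fg; have [A [hA <-]] := Kach (f - g).
  have [_ lbA] := H A hA; rewrite phiB; apply: lbA.
  - by exists f.
  - by exists g.
  move=> e; apply: fg; apply/eqP; rewrite -subr_eq0; apply/eqP.
  by apply: (phi_inj hA); rewrite phiB e subrr.
split => //.
have [[f' [g' [[f [Cf ef]] [g [Cg eg]] ne hd]]] _] := H B hB.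
rewrite -[Evec _ _ _ _]/(phi B f) phiBB in ef.
rewrite -[Evec _ _ _ _]/(phi B g) phiBB in eg.
subst f' g'; exists f, g; split => //.
apply/eqP; rewrite eqn_leq lb // andbT -hd -{2}(phiBB (f - g)); exact: Klb.
Qed.
End Main.
End Skew.

Unset Implicit Arguments.

Theorem mainTheorem5 (F : unitRingType)
  (hdiv : forall a : F, a != 0 -> a \is a GRing.unit)
  (sigma : {rmorphism F -> F}) (delta : F -> F)
  (hdadd : forall a b : F, delta (a + b) = delta a + delta b)
  (hdmul : forall a b : F, delta (a * b) = sigma a * delta b + delta a * b)
  (Om : F -> Prop) (hOm : Pclosed sigma delta Om)
  (B : seq F) (hB : PBasis sigma delta Om B)
  (C : 'rV[F]_(size B) -> Prop) (k : nat) (hC : left_code_dim C k) (hk : (1 <= k)%N) :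
  min_dist_is (skew_wt sigma delta Om B) C (Rk sigma delta Om - k + 1)%N <->
  (forall A : seq F, PBasis sigma delta Om A ->
     min_dist_is (@ham_wt F (size A)) (piBA sigma delta B A C) (Rk sigma delta Om - k + 1)%N).
Proof. exact: (main hdiv hdadd hdmul hOm hB hC hk). Qed.
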